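(* Assume $q\neq 0$, $d\neq 0$ and $A\neq 0$. For every integer $n$ let $x_n=h_{n+1}-qh_{n-1}$. Then for all integers $n$ and $k$, $$\left(\frac{x_n+h_n d}{2Ad}\right)^k=\frac{x_{kn}+h_{kn}d}{2Ad}.$$
   Context: Let $p,q,a,b$ be complex numbers. Fix $d=\sqrt{p^2-4q}$ and put $\alpha=\frac{p+d}{2}$, $\beta=\frac{p-d}{2}$, $A=b-a\beta$. The Horadam-Lucas sequence $(h_n)$ is defined by $h_0=2b-ap$, $h_1=bp-2aq$, and $h_n=ph_{n-1}-qh_{n-2}$. Since $q\neq 0$, it is extended to all integer indices by $h_{n-2}=(ph_{n-1}-h_n)/q$. *)

(* Defs.v *)
From mathcomp Require Import all_boot all_algebra.
From mathcomp Require Import complex reals.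
Set Implicit Arguments. Unset Strict Implicit. Unset Printing Implicit Defensive.
Import GRing.Theory Num.Theory.
Local Open Scope ring_scope.

(* When q <> 0 this recurrence on all of Z is equivalent to
   the forward recurrence together with the backward extension
   h (n-2) = (p h (n-1) - h n) / q, and determines h uniquely. *)
Definition horadam_lucas (C : ringType) (p q a b : C) (h : int -> C) : Prop :=
  [/\ h 0 = 2 * b - a * p,
      h 1 = b * p - 2 * a * q
    & forall n : int, h n = p * h (n - 1) - q * h (n - 2)].

(* Main.v *)
Require Import Defs.
From mathcomp Require Import all_boot all_algebra.
From mathcomp Require Import complex reals.
From mathcomp Require Import ring lra zify.
Import GRing.Theory Num.Theory.
Local Open Scope ring_scope.

Lemma int_const (C : Type) (f : int -> C) :
  (forall n : int, f (n + 1) = f n) -> forall n, f n = f 0.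
Proof.
move=> H.
have Hp : forall m : nat, f m%:Z = f 0 /\ f (- m%:Z) = f 0.
  elim=> [|m [IH1 IH2]]; first by rewrite oppr0.
  split.
    have -> : (m.+1 : int) = m%:Z + 1 by rewrite -addn1 PoszD.
    by rewrite H.
  rewrite -IH2.
  have -> : - (m%:Z) = - (m.+1 : int) + 1 by rewrite -addn1 PoszD; ring.
  by rewrite H.
case=> m; first by case: (Hp m).
rewrite NegzE; by case: (Hp m.+1).
Qed.

Theorem mainTheorem2 (R : realType) (p q a b d : R[i]) (h : int -> R[i]) :
  d ^+ 2 = p ^+ 2 - 4 * q ->
  horadam_lucas p q a b h ->
  q != 0 -> d != 0 -> b - a * ((p - d) / 2) != 0 ->
  let A := b - a * ((p - d) / 2) in
  let x := fun n : int => h (n + 1) - q * h (n - 1) in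
  forall n k : int,
    ((x n + h n * d) / (2 * A * d)) ^ k = (x (k * n) + h (k * n) * d) / (2 * A * d).
Proof.
move=> hd [h0 h1 hr] q0 d0 A0 A x.
have two0 : (2 : R[i]) != 0 by rewrite pnatr_eq0.
have hq : q = (p ^+ 2 - d ^+ 2) / 4.
  by rewrite hd; field.
set al := (p + d) / 2.
have al0 : al != 0.
  apply/negP => /eqP E; move: q0; rewrite hq.
  have -> : p = - d.
    apply/eqP; rewrite -subr_eq0 opprK; apply/eqP.
    by move: E => /eqP; rewrite mulf_eq0 invr_eq0 (negbTE two0) orbF => /eqP.
  by rewrite sqrrN subrr mul0r eqxx.
set y := fun n : int => x n + h n * d.
have hy : forall m, y m = 2 * (h (m + 1) - (p - d) / 2 * h m).
  move=> m; rewrite /y /x.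
  have E : h (m + 1) = p * h m - q * h (m - 1).
    by rewrite hr; congr (_ * h _ - _ * h _); ring.
  have -> : q * h (m - 1) = p * h m - h (m + 1) by rewrite E; ring.
  by field.
have step : forall m, y (m + 1) = al * y m.
  move=> m; rewrite !hy.
  have E : h (m + 1 + 1) = p * h (m + 1) - q * h m.
    by rewrite hr; congr (_ * h _ - _ * h _); ring.
  by rewrite E hq /al; field.
have y0 : y 0 = 2 * A * d.
  by rewrite hy add0r h1 h0 /A hq; field.
have Hc : forall j, y (j + 1) / al ^ (j + 1) = y j / al ^ j.
  move=> j; rewrite step expfzDr // expr1z (mulrC (al ^ j)) -mulf_div.
  by rewrite divff // mul1r.
have Y : forall m, y m = al ^ m * y 0.
  move=> m.
  have := @int_const _ (fun j => y j / al ^ j) Hc m.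
  rewrite /= expr0z divr1 => <-.
  by rewrite mulrC divfK // expfz_neq0.
have c0 : 2 * A * d != 0 by rewrite !mulf_neq0.
move=> n k.
have -> : x n + h n * d = y n by [].
have -> : x (k * n) + h (k * n) * d = y (k * n) by [].
rewrite (Y n) (Y (k * n)) y0 !mulfK // exprz_exp; congr (_ ^ _); exact: mulrC.
Qed.
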